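(* Assume the standing setting described in the context (in particular Conditions (I), (II), (III)). Let $y\in\mathbb{R}$ satisfy $g(y)>0$, and let $(\widehat{Y}_1(y),\widehat{Y}_2(y))\in\mathbb{K}_1^*\times\mathbb{K}_2^*$ be an optimal solution of the minimization problem defining $g(y)$. Then $$y-\rho\, g(y)\;\le\; y+\rho\,\tilde t\big(y,\widehat{Y}_2(y)\big)\;\le\; y^*.$$
   Context: Setting: $\mathbb{V}$ is a finite Cartesian product of spaces of real symmetric matrices, with the trace inner product $\langle X,Y\rangle$ and norm $\|X\|=\sqrt{\langle X,X\rangle}$; $I$ denotes the identity element of $\mathbb{V}$ and, for $A\in\mathbb{V}$, $\lambda_{\min}(A)$ ($\lambda_{\max}(A)$) is the smallest (largest) eigenvalue over all blocks. $\mathbb{K}_1$ is the cone of positive semidefinite elements of $\mathbb{V}$ (so $\mathbb{K}_1^*=\mathbb{K}_1$), $\mathbb{K}_2\subseteq\mathbb{V}$ is a closed convex cone, and for a cone $\mathbb{J}$, $\mathbb{J}^*=\{Y:\langle X,Y\rangle\ge0\ \forall X\in\mathbb{J}\}$. Condition (II): $(\mathbb{K}_1\cap\mathbb{K}_2)^*=\mathbb{K}_1^*+\mathbb{K}_2^*$. Given $Q,H\in\mathbb{V}$, consider the primal problem $\varphi^*=\inf\{\langle Q,X\rangle: X\in\mathbb{K}_1\cap\mathbb{K}_2,\ \langle H,X\rangle=1\}$ and its dual $y^*=\sup\{y: Q-Hy=Y_1+Y_2,\ Y_1\in\mathbb{K}_1^*,\ Y_2\in\mathbb{K}_2^*\}$.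 Condition (I): the primal problem is feasible and $H\in\mathbb{K}_1^*+\mathbb{K}_2^*$. Condition (III): a number $\rho>0$ is known such that $\langle I,X\rangle\le\rho$ for every feasible $X$ of the primal problem. Define $G(y)=Q-Hy$, and $$g(y)=\min\{\|G(y)-(Y_1+Y_2)\|: Y_1\in\mathbb{K}_1^*,\ Y_2\in\mathbb{K}_2^*\}.$$ For $y\in\mathbb{R}$ and $Y_2\in\mathbb{K}_2^*$, define $\tilde t(y,Y_2)=\min\{0,\lambda_{\min}(G(y)-Y_2)\}$. *)

(* Defs.v *)
From Stdlib Require Import Reals ClassicalEpsilon.
From mathcomp Require Import all_boot all_algebra.
Set Implicit Arguments. Unset Strict Implicit. Unset Printing Implicit Defensive.
Open Scope R_scope.

Section Space.
(* V = S^{n 0} x ... x S^{n (k-1)} ; an element is a k-tuple of square real matrices,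
   the symmetric ones forming V (predicate symV). *)
Variables (k : nat) (n : 'I_k -> nat).

Definition mkM (m : nat) (f : 'I_m -> 'I_m -> R) : 'M[R]_m :=
  matrix_of_fun matrix_key f.

Definition Vt := forall i : 'I_k, 'M[R]_(n i).

Definition symV (X : Vt) : Prop := forall i a b, X i a b = X i b a.

Definition vzero : Vt := fun i => mkM (fun a b => 0).
Definition vI : Vt := fun i => mkM (fun a b => if a == b then 1 else 0).
Definition vadd (X Y : Vt) : Vt := fun i => mkM (fun a b => X i a b + Y i a b).
Definition vsub (X Y : Vt) : Vt := fun i => mkM (fun a b => X i a b - Y i a b).
Definition vscale (c : R) (X : Vt) : Vt := fun i => mkM (fun a b => c * X i a b).

(* trace inner product <X,Y> = sum_i tr(X_i Y_i) (= sum of entrywise products for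
   symmetric blocks); written entrywise as sum_i sum_{a,b} X_i(a,b) Y_i(a,b) *)
Definition inner (X Y : Vt) : R :=
  \big[Rplus/0]_(i < k) \big[Rplus/0]_(a < n i) \big[Rplus/0]_(b < n i) (X i a b * Y i a b).

Definition vnorm (X : Vt) : R := sqrt (inner X X).

Definition is_eigenvalue (X : Vt) (l : R) : Prop :=
  exists (i : 'I_k) (v : 'I_(n i) -> R), (exists a, v a <> 0) /\
    forall a, \big[Rplus/0]_(b < n i) (X i a b * v b) = l * v a.

Definition is_lambda_min (X : Vt) (l : R) : Prop :=
  is_eigenvalue X l /\ forall l', is_eigenvalue X l' -> l <= l'.

Definition lambda_min (X : Vt) : R := epsilon (inhabits 0) (is_lambda_min X).

Definition psd (X : Vt) : Prop :=
  symV X /\ forall (i : 'I_k) (v : 'I_(n i) -> R),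
    0 <= \big[Rplus/0]_(a < n i) \big[Rplus/0]_(b < n i) (v a * X i a b * v b).

Definition dual (J : Vt -> Prop) (Y : Vt) : Prop :=
  symV Y /\ forall X, J X -> 0 <= inner X Y.

Definition cap (J1 J2 : Vt -> Prop) (X : Vt) : Prop := J1 X /\ J2 X.

Definition msum (J1 J2 : Vt -> Prop) (Y : Vt) : Prop :=
  exists Y1 Y2, J1 Y1 /\ J2 Y2 /\ Y = vadd Y1 Y2.

Definition closed_convex_cone (K : Vt -> Prop) : Prop :=
  (forall X, K X -> symV X) /\
  K vzero /\
  (forall X Y, K X -> K Y -> K (vadd X Y)) /\
  (forall c X, 0 <= c -> K X -> K (vscale c X)) /\
  (forall X, symV X -> ~ K X ->
     exists eps, 0 < eps /\ forall Z, symV Z -> vnorm (vsub Z X) < eps -> ~ K Z).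

End Space.

(* Main.v *)
Require Import Defs.
From Stdlib Require Import Reals ClassicalEpsilon Lra.
From mathcomp Require Import all_boot all_algebra.
From mathcomp Require Import Rstruct.
Open Scope R_scope.
Set Implicit Arguments. Unset Strict Implicit. Unset Printing Implicit Defensive.

Notation "\S_ ( i < m ) F" := (\big[Rplus/0]_(i < m) F) (at level 36, F at level 36, i, m at level 50).


Lemma sum_le m (F G : 'I_m -> R) : (forall i, F i <= G i) ->
  \S_(i < m) F i <= \S_(i < m) G i.
Proof. move=> H; apply: (big_ind2 (fun x y => x <= y)) => //; [lra| move=> *; lra]. Qed.

Lemma sum_ge0 m (F : 'I_m -> R) : (forall i, 0 <= F i) -> 0 <= \S_(i < m) F i.
Proof. move=> H; apply: (big_ind (fun x => 0 <= x)) => //; [lra| move=> *; lra]. Qed.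

Lemma sum_add m (F G : 'I_m -> R) :
  \S_(i < m) (F i + G i) = \S_(i < m) F i + \S_(i < m) G i.
Proof. exact: big_split. Qed.

Lemma sum_scal m c (F : 'I_m -> R) : \S_(i < m) (c * F i) = c * \S_(i < m) F i.
Proof.
apply: (big_ind2 (fun x y => x = c * y)) => //; [ring| move=> x1 x2 y1 y2 -> ->; ring].
Qed.

Lemma sum_opp m (F : 'I_m -> R) : \S_(i < m) (- F i) = - \S_(i < m) F i.
Proof.
apply: (big_ind2 (fun x y => x = - y)) => //; [ring| move=> x1 x2 y1 y2 -> ->; ring].
Qed.

Lemma sum_sub m (F G : 'I_m -> R) :
  \S_(i < m) (F i - G i) = \S_(i < m) F i - \S_(i < m) G i.
Proof. rewrite /Rminus sum_add sum_opp //. Qed.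

Lemma sum_ext m (F G : 'I_m -> R) : (forall i, F i = G i) ->
  \S_(i < m) F i = \S_(i < m) G i.
Proof. move=> H; exact: eq_bigr. Qed.

Lemma sum_zero m (F : 'I_m -> R) : (forall i, F i = 0) -> \S_(i < m) F i = 0.
Proof. move=> H; apply: big1 => i _; exact: H. Qed.

Lemma sum_delta m (p : 'I_m) (F : 'I_m -> R) :
  \S_(b < m) ((if b == p then 1 else 0) * F b) = F p.
Proof.
rewrite (bigD1 p) //= eqxx big1 => [|b /negbTE ->]; ring.
Qed.

Lemma sum_delta' m (p : 'I_m) (F : 'I_m -> R) :
  \S_(b < m) (F b * (if b == p then 1 else 0)) = F p.
Proof. rewrite -(sum_delta p F); apply: sum_ext => b; ring. Qed.

Lemma sum_swap m m' (F : 'I_m -> 'I_m' -> R) :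
  \S_(a < m) \S_(b < m') F a b = \S_(b < m') \S_(a < m) F a b.
Proof. exact: exchange_big. Qed.

Lemma sum_term m (F : 'I_m -> R) (p : 'I_m) : (forall i, 0 <= F i) ->
  F p <= \S_(i < m) F i.
Proof.
move=> H; rewrite (bigD1 p) //=.
set s := \big[_/_]_(_ < _ | _) _.
have : 0 <= s.
  apply: (big_ind (fun x => 0 <= x)) => //; [lra| move=> *; lra].
lra.
Qed.

Definition qf m (A : 'I_m -> 'I_m -> R) (w : 'I_m -> R) :=
  \S_(a < m) \S_(b < m) (w a * A a b * w b).
Definition bil m (A : 'I_m -> 'I_m -> R) (u w : 'I_m -> R) :=
  \S_(a < m) \S_(b < m) (u a * A a b * w b).
Definition nsq m (w : 'I_m -> R) := \S_(a < m) (w a * w a).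
Definition psdf m (A : 'I_m -> 'I_m -> R) := forall w, 0 <= qf A w.
Definition symf m (A : 'I_m -> 'I_m -> R) := forall a b, A a b = A b a.

Lemma add2 m m' (F G : 'I_m -> 'I_m' -> R) :
  \S_(a < m) \S_(b < m') (F a b + G a b) =
  \S_(a < m) \S_(b < m') F a b + \S_(a < m) \S_(b < m') G a b.
Proof. rewrite -sum_add; apply: sum_ext => a; exact: sum_add. Qed.

Lemma scal2 m m' c (F : 'I_m -> 'I_m' -> R) :
  \S_(a < m) \S_(b < m') (c * F a b) = c * \S_(a < m) \S_(b < m') F a b.
Proof. rewrite -sum_scal; apply: sum_ext => a; exact: sum_scal. Qed.

Lemma discr2 a b c : 0 <= a -> (forall s, 0 <= a*s*s + 2*b*s + c) -> b*b <= a*c.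
Proof.
move=> Ha.
case: (Rle_lt_or_eq_dec 0 a Ha) => [Hp|<-] H.
  have := H (- b / a).
  have -> : a * (- b / a) * (- b / a) + 2 * b * (- b / a) + c = c - b * b / a
    by field; lra.
  move=> H1.
  have : b * b / a <= c by lra.
  move=> H2. have := Rmult_le_compat_l a _ _ Ha H2.
  have -> : a * (b * b / a) = b * b by field; lra.
  done.
case: (Req_dec b 0) => [->|Hb]; first lra.
set s0 := (- (Rabs c + 1) / (2 * b)).
have Hs : b * s0 = -(Rabs c + 1) / 2 by rewrite /s0; field.
have := H s0.
have := Rle_abs c. move=> h1 h2. exfalso. 
have E : 0 * s0 * s0 + 2 * b * s0 + c = c - (Rabs c + 1) by rewrite !Rmult_assoc Hs; field.
lra.
Qed.

Lemma nsq_ge0 m (w : 'I_m -> R) : 0 <= nsq w.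
Proof. apply: sum_ge0 => a; nra. Qed.

Lemma term_le_nsq m (w : 'I_m -> R) a : w a * w a <= nsq w.
Proof. rewrite /nsq; apply: (@sum_term _ (fun a => w a * w a) a) => i; nra. Qed.

Lemma qf_shift m (A : 'I_m -> 'I_m -> R) u w s :
  qf A (fun a => u a + s * w a) = qf A u + s * (bil A u w + bil A w u) + s * s * qf A w.
Proof.
rewrite /qf /bil.
transitivity (\S_(a < m) \S_(b < m) (u a * A a b * u b +
   (s * (u a * A a b * w b) + s * (w a * A a b * u b)) + (s * s) * (w a * A a b * w b))).
  apply: sum_ext => a; apply: sum_ext => b; ring.
rewrite !add2 !scal2; ring.
Qed.

Lemma bil_sym m (A : 'I_m -> 'I_m -> R) u w : symf A -> bil A w u = bil A u w.
Proof.
move=> HA; rewrite /bil sum_swap; apply: sum_ext => a; apply: sum_ext => b.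
rewrite HA; ring.
Qed.

Lemma cs_form m (A : 'I_m -> 'I_m -> R) u w : symf A -> psdf A ->
  bil A u w * bil A u w <= qf A w * qf A u.
Proof.
move=> HS HP; apply: discr2 => // s.
have := HP (fun a => u a + s * w a); rewrite qf_shift (bil_sym u w HS); lra.
Qed.

Lemma cs_plain m (c z : 'I_m -> R) :
  \S_(a < m) (c a * z a) * \S_(a < m) (c a * z a) <= nsq c * nsq z.
Proof.
apply: discr2; first exact: nsq_ge0.
move=> s.
have : 0 <= \S_(a < m) ((z a + s * c a) * (z a + s * c a)) by apply: sum_ge0 => a; exact: Rle_0_sqr.
have -> : \S_(a < m) ((z a + s * c a) * (z a + s * c a)) =
  \S_(a < m) ((s * s) * (c a * c a) + ((2 * s) * (c a * z a) + z a * z a)).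
  by apply: sum_ext => a; ring.
rewrite !sum_add !sum_scal /nsq; lra.
Qed.

Lemma sum_abs m (F : 'I_m -> R) : Rabs (\S_(a < m) F a) <= \S_(a < m) Rabs (F a).
Proof.
apply: (big_ind2 (fun x y => Rabs x <= y)).
- rewrite Rabs_R0; lra.
- move=> x1 x2 y1 y2 H1 H2; have := Rabs_triang x1 y1; lra.
- move=> i _; lra.
Qed.

Definition sabs m (A : 'I_m -> 'I_m -> R) := \S_(a < m) \S_(b < m) Rabs (A a b).

Lemma sabs_ge0 m (A : 'I_m -> 'I_m -> R) : 0 <= sabs A.
Proof. apply: sum_ge0 => a; apply: sum_ge0 => b; exact: Rabs_pos. Qed.

Lemma qf_abs m (A : 'I_m -> 'I_m -> R) w : Rabs (qf A w) <= sabs A * nsq w.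
Proof.
rewrite /qf /sabs Rmult_comm -sum_scal.
apply: Rle_trans; first exact: sum_abs.
apply: sum_le => a; rewrite -sum_scal.
apply: Rle_trans; first exact: sum_abs.
apply: sum_le => b.
have Ha := term_le_nsq w a; have Hb := term_le_nsq w b.
have H1 : Rabs (w a * w b) <= nsq w.
  rewrite Rabs_mult.
  have := Rabs_pos (w a); have := Rabs_pos (w b).
  have E1 : Rabs (w a) * Rabs (w a) = w a * w a by rewrite -Rabs_mult Rabs_right; nra.
  have E2 : Rabs (w b) * Rabs (w b) = w b * w b by rewrite -Rabs_mult Rabs_right; nra.
  nra.
have -> : w a * A a b * w b = A a b * (w a * w b) by ring.
rewrite Rabs_mult.
have := Rabs_pos (A a b). nra.
Qed.

Lemma qf_eig m (A : 'I_m -> 'I_m -> R) v :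
  qf A v = \S_(a < m) (v a * \S_(b < m) (A a b * v b)).
Proof.
apply: sum_ext => a; rewrite -sum_scal; apply: sum_ext => b; ring.
Qed.

Lemma bil_eig m (A : 'I_m -> 'I_m -> R) u w :
  bil A u w = \S_(a < m) (u a * \S_(b < m) (A a b * w b)).
Proof.
apply: sum_ext => a; rewrite -sum_scal; apply: sum_ext => b; ring.
Qed.

Lemma inv_entries m (B : 'M[R]_m) : B \in unitmx -> forall c b,
  \S_(a < m) (invmx B c a * B a b) = if c == b then 1 else 0.
Proof.
move=> HU c b; have := congr1 (fun M : 'M[R]_m => M c b) (mulVmx HU).
rewrite !mxE /= => E.
have -> : (if c == b then 1 else 0) = ((c == b)%:R)%R by case: eqP.
rewrite -E; reflexivity.
Qed.

Lemma key_inv m (B : 'M[R]_m) : symf (fun a b => B a b) -> psdf (fun a b => B a b) ->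
  (\det B != 0)%R -> exists C, 0 <= C /\ forall w, nsq w <= C * qf (fun a b => B a b) w.
Proof.
move=> HS HP Hdet.
have HU : B \in unitmx by rewrite unitmxE GRing.unitfE.
have HBi := inv_entries HU.
set Bi := invmx B in HBi.
set T := \S_(c < m) nsq (fun a => Bi c a).
set S := sabs (fun a b => B a b).
have HT : 0 <= T by apply: sum_ge0 => c; exact: nsq_ge0.
have HS0 : 0 <= S by exact: sabs_ge0.
exists (T * S); split; first by nra.
move=> w.
set z := fun a => \S_(b < m) (B a b * w b).
have Hq := HP w.
have Hbil : bil (fun a b => B a b) z w = nsq z by rewrite bil_eig.
have Hcs := cs_form z w HS HP.
have Hqz : qf (fun a b => B a b) z <= S * nsq z.
  have h1 := qf_abs (fun a b => B a b) z; have h2 := Rle_abs (qf (fun a b => B a b) z).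
  rewrite -/S in h1; lra.
have HN := nsq_ge0 z.
have HNz : nsq z <= S * qf (fun a b => B a b) w.
  rewrite Hbil in Hcs.
  case: (Rle_lt_or_eq_dec 0 (nsq z) HN) => [Hp|<-]; last exact: Rmult_le_pos.
  have H1 : nsq z * nsq z <= nsq z * (S * qf (fun a b => B a b) w).
    have := Rmult_le_compat_l (qf (fun a b => B a b) w) _ _ Hq Hqz. nra.
  apply: (Rmult_le_reg_l (nsq z)) => //.
have Hw : forall c, w c = \S_(a < m) (Bi c a * z a).
  move=> c.
  transitivity (\S_(a < m) \S_(b < m) (Bi c a * B a b * w b)).
    rewrite sum_swap.
    transitivity (\S_(b < m) ((if b == c then 1 else 0) * w b)); first by rewrite sum_delta.
    apply: sum_ext => b.
    have -> : (if b == c then 1 else 0) = (if c == b then 1 else 0) by rewrite eq_sym.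
    rewrite -(HBi c b) Rmult_comm -sum_scal; apply: sum_ext => a; ring.
  apply: sum_ext => a; rewrite /z -sum_scal; apply: sum_ext => b; ring.
have Hnw : nsq w <= T * nsq z.
  rewrite /T Rmult_comm -sum_scal /nsq; apply: sum_le => c.
  rewrite Hw Rmult_comm; exact: cs_plain.
have := Rmult_le_compat_l T _ _ HT HNz. nra.
Qed.

Lemma core m (A : 'I_m -> 'I_m -> R) : (0 < m)%N -> symf A ->
  exists l (v : 'I_m -> R), (exists a, v a <> 0) /\
    (forall a, \S_(b < m) (A a b * v b) = l * v a) /\
    (forall w, l * nsq w <= qf A w).
Proof.
move=> Hm HA.
pose E := fun r => exists w : 'I_m -> R, 0 < nsq w /\ r = - (qf A w / nsq w).
have Hb : bound E.
  exists (sabs A) => r [w [HN ->]].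
  have h1 := qf_abs A w; have h2 := Rle_abs (- qf A w); rewrite Rabs_Ropp in h2.
  have h3 : - qf A w <= sabs A * nsq w by lra.
  have -> : - (qf A w / nsq w) = (- qf A w) / nsq w by field; lra.
  apply: (Rmult_le_reg_r (nsq w)) => //.
  have -> : - qf A w / nsq w * nsq w = - qf A w by field; lra.
  done.
pose p := Ordinal Hm.
pose e := fun a : 'I_m => if a == p then 1 else 0.
have He : nsq e = 1.
  rewrite /nsq -(sum_delta p (fun _ => 1)); apply: sum_ext => a; rewrite /e; case: eqP => _; ring.
have Hne : exists r, E r by exists (- (qf A e / nsq e)), e; rewrite He; split => //; lra.
have [M [HM1 HM2]] := completeness E Hb Hne.
pose l := - M.
have Hlow : forall w, l * nsq w <= qf A w.
  move=> w; case: (Rle_lt_or_eq_dec 0 (nsq w) (nsq_ge0 w)) => [HN|HN].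
    have := HM1 (- (qf A w / nsq w)) (ex_intro _ w (conj HN erefl)).
    move=> h; rewrite /l.
    have h' : - M <= qf A w / nsq w by lra.
    have := Rmult_le_compat_r (nsq w) _ _ (Rlt_le _ _ HN) h'.
    have -> : qf A w / nsq w * nsq w = qf A w by field; lra.
    lra.
  rewrite -HN Rmult_0_r.
  have h1 := qf_abs A w; rewrite -HN Rmult_0_r in h1.
  have := Rabs_pos (qf A w); have := Rle_abs (- qf A w); rewrite Rabs_Ropp; lra.
pose Bm := (\matrix_(a < m, b < m) (A a b - l * (if a == b then 1 else 0)) : 'M[R]_m)%R.
have HBm : forall a b, Bm a b = A a b - l * (if a == b then 1 else 0) by move=> a b; rewrite mxE.
have HqB : forall w, qf (fun a b => Bm a b) w = qf A w - l * nsq w.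
  move=> w; rewrite /qf /nsq -sum_scal -sum_sub; apply: sum_ext => a.
  transitivity (\S_(b < m) (w a * A a b * w b - (l * w a) * (w b * (if b == a then 1 else 0)))).
    apply: sum_ext => b; rewrite HBm; rewrite (eq_sym a b); ring.
  rewrite sum_sub sum_scal sum_delta'; ring.
have HsB : symf (fun a b => Bm a b) by move=> a b; rewrite !HBm HA eq_sym.
have HpB : psdf (fun a b => Bm a b) by move=> w; rewrite HqB; have := Hlow w; lra.
have Hdet : (\det Bm == 0)%R.
  apply/negPn/negP => Hd.
  have [C [HC HCw]] := key_inv HsB HpB Hd.
  pose eps := / (C + 1).
  have Heps : 0 < eps by apply: Rinv_0_lt_compat; lra.
  have [r [Er Hr]] : exists r, E r /\ M - eps < r.
    apply: NNPP => Hno.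
    have : M <= M - eps.
      apply: HM2 => r Er; apply: Rnot_lt_le => Hlt; apply: Hno; exists r; split => //.
    lra.
  case: Er => w [HN Hrw]; rewrite Hrw in Hr.
  have h1 : qf A w / nsq w < l + eps by rewrite /l; lra.
  have h2 : qf A w < (l + eps) * nsq w.
    have := Rmult_lt_compat_r (nsq w) _ _ HN h1.
    have -> : qf A w / nsq w * nsq w = qf A w by field; lra.
    done.
  have h3 := HCw w; rewrite HqB in h3.
  have h4 : C * (qf A w - l * nsq w) <= C * (eps * nsq w).
    apply: Rmult_le_compat_l => //; lra.
  have h5 : C * eps < 1.
    rewrite /eps; apply: (Rmult_lt_reg_r (C + 1)); first lra.
    have -> : C * / (C + 1) * (C + 1) = C by field; lra.
    lra.
  have : nsq w < nsq w.
    have : C * (eps * nsq w) < nsq w.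
      have -> : C * (eps * nsq w) = (C * eps) * nsq w by ring.
      have := Rmult_lt_compat_r (nsq w) _ _ HN h5; lra.
    lra.
  lra.
have [v Hv0 HvB] := det0P Hdet.
exists l, (fun a => v ord0 a); split; [|split] => //.
  apply: NNPP => Hall; apply/negP: Hv0; apply/negPn/eqP/rowP => a; rewrite mxE.
  have [/eqP //|] := boolP (v ord0 a == 0); move/eqP => Hva.
  by exfalso; apply: Hall; exists a.
move=> a; have := congr1 (fun M : 'M[R]_(1, m) => M ord0 a) HvB.
rewrite !mxE /= => Ha.
have Ha' : \S_(j < m) (v ord0 j * Bm j a) = 0 by exact: Ha.
have : \S_(j < m) (v ord0 j * Bm j a) = \S_(j < m) (A a j * v ord0 j) - l * v ord0 a.
  transitivity (\S_(j < m) (A a j * v ord0 j - l * ((if j == a then 1 else 0) * v ord0 j))).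
    apply: sum_ext => j; rewrite HBm HA (eq_sym j a); ring.
  by rewrite sum_sub sum_scal sum_delta.
rewrite Ha' => Eq; apply: Rminus_diag_uniq; rewrite -Eq; ring.
Qed.

Definition dl m (p : 'I_m) : 'I_m -> R := fun a => if a == p then 1 else 0.

Lemma bil_dl_r m (A : 'I_m -> 'I_m -> R) u y :
  bil A u (dl y) = \S_(a < m) (u a * A a y).
Proof. apply: sum_ext => a; exact: sum_delta'. Qed.

Lemma bil_dl_l m (A : 'I_m -> 'I_m -> R) x w :
  bil A (dl x) w = \S_(b < m) (A x b * w b).
Proof.
rewrite /bil sum_swap; apply: sum_ext => b.
rewrite -(sum_delta x (fun a => A a b * w b)); apply: sum_ext => a; rewrite /dl; ring.
Qed.

Lemma bil_dl m (A : 'I_m -> 'I_m -> R) x y : bil A (dl x) (dl y) = A x y.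
Proof. by rewrite bil_dl_r; rewrite -(sum_delta x (fun a => A a y)); apply: sum_ext => a; rewrite /dl; ring. Qed.

Lemma qf_bil m (A : 'I_m -> 'I_m -> R) w : qf A w = bil A w w.
Proof. by []. Qed.

Lemma qf_dl m (A : 'I_m -> 'I_m -> R) x : qf A (dl x) = A x x.
Proof. exact: bil_dl. Qed.

Lemma sum_prod m m' (f : 'I_m -> R) (g : 'I_m' -> R) :
  \S_(a < m) \S_(b < m') (f a * g b) = \S_(a < m) f a * \S_(b < m') g b.
Proof.
rewrite Rmult_comm -sum_scal; apply: sum_ext => a; rewrite sum_scal; ring.
Qed.

Lemma fejer_gen m (B : 'I_m -> 'I_m -> R) : psdf B -> forall d (A : 'I_m -> 'I_m -> R),
  symf A -> psdf A -> (forall a b : 'I_m, (a < m - d)%N -> A a b = 0) ->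
  0 <= \S_(a < m) \S_(b < m) (A a b * B a b).
Proof.
move=> HB; elim=> [|d IH] A HS HP HZ.
  rewrite sum_zero; first lra.
  move=> a; apply: sum_zero => b; rewrite HZ; [ring| rewrite subn0; exact: ltn_ord].
case: (ltnP d m) => Hdm; last first.
  apply: IH => // a b Ha; apply: HZ; move: Ha.
  have -> : (m - d = 0)%N by apply/eqP; rewrite subn_eq0.
  by [].
have Hk : (m - d.+1 < m)%N by rewrite ltn_subrL; apply/andP; split => //; apply: leq_ltn_trans Hdm.
pose p := Ordinal Hk.
have Hpp : 0 <= A p p by have := HP (dl p); rewrite qf_dl.
have Hrow : forall a : 'I_m, (a < m - d.+1)%N -> forall b, A a b = 0 /\ A b a = 0.
  move=> a Ha b; split; first exact: HZ.
  by rewrite HS; apply: HZ.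
have Hmd : (m - d = (m - d.+1).+1)%N by rewrite subnSK.
case: (Rle_lt_or_eq_dec 0 (A p p) Hpp) => [Hpos|H0].
  pose A' := fun a b => A a b - A a p * A p b / A p p.
  have HS' : symf A' by move=> a b; rewrite /A' HS (HS p b) (HS a p); field; lra.
  have HP' : psdf A'.
    move=> w.
    pose c := \S_(b < m) (A p b * w b).
    have Hc1 : bil A w (dl p) = c.
      rewrite bil_dl_r /c; apply: sum_ext => a; rewrite HS; ring.
    have Hc2 : bil A (dl p) w = c by rewrite bil_dl_l.
    have := HP (fun a => w a + (- c / A p p) * dl p a).
    rewrite qf_shift Hc1 Hc2 qf_dl => H1.
    have -> : qf A' w = qf A w - c * c / A p p.
      rewrite /qf /A'.
      transitivity (\S_(a < m) \S_(b < m) (w a * A a b * w b + (- / A p p) * ((w a * A a p) * (A p b * w b)))).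
        apply: sum_ext => a; apply: sum_ext => b; field; lra.
      rewrite add2 scal2 sum_prod.
      have -> : \S_(a < m) (w a * A a p) = c by rewrite -Hc1 bil_dl_r.
      rewrite -/c; field; lra.
    have -> : qf A w - c * c / A p p = qf A w + - c / A p p * (c + c) + - c / A p p * (- c / A p p) * A p p
      by field; lra.
    exact: H1.
  have HZ' : forall a b : 'I_m, (a < m - d)%N -> A' a b = 0.
    move=> a b; rewrite Hmd ltnS leq_eqVlt => /orP [/eqP Ha|Ha].
      have -> : a = p by apply: val_inj.
      rewrite /A'; field; lra.
    rewrite /A' (proj1 (Hrow a Ha b)) (proj1 (Hrow a Ha p)); field; lra.
  have := IH A' HS' HP' HZ'.
  have -> : \S_(a < m) \S_(b < m) (A a b * B a b) =
     \S_(a < m) \S_(b < m) (A' a b * B a b) +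
     / A p p * qf B (fun a => A p a).
    rewrite /qf -scal2 -add2; apply: sum_ext => a; apply: sum_ext => b.
    rewrite /A' (HS a p); field; lra.
  have := HB (fun a => A p a).
  have := Rinv_0_lt_compat _ Hpos.
  nra.
have Hp0 : forall b, A p b = 0.
  move=> b.
  have := HP (fun a => dl b a + 1 * dl p a) => _.
  have Hd : A p b * A p b <= 0 * A b b.
    apply: (@discr2 0 (A p b) (A b b)); first lra.
    move=> s; have := HP (fun a => dl b a + s * dl p a).
    rewrite qf_shift !qf_dl bil_dl bil_dl -H0 (HS b p); lra.
  nra.
apply: IH => // a b; rewrite Hmd ltnS leq_eqVlt => /orP [/eqP Ha|Ha].
  have -> : a = p by apply: val_inj.
  exact: Hp0.
exact: (proj1 (Hrow a Ha b)).
Qed.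

Lemma fejer m (A B : 'I_m -> 'I_m -> R) : symf A -> psdf A -> psdf B ->
  0 <= \S_(a < m) \S_(b < m) (A a b * B a b).
Proof.
move=> HS HA HB; apply: (@fejer_gen m B HB m A HS HA) => a b.
by rewrite subnn.
Qed.

Lemma mkME m (f : 'I_m -> 'I_m -> R) a b : mkM f a b = f a b.
Proof. by rewrite /mkM mxE. Qed.

Section V.
Variables (k : nat) (n : 'I_k -> nat).

Lemma vaddE (X Y : Vt n) i a b : vadd X Y i a b = X i a b + Y i a b.
Proof. exact: mkME. Qed.
Lemma vsubE (X Y : Vt n) i a b : vsub X Y i a b = X i a b - Y i a b.
Proof. exact: mkME. Qed.
Lemma vscaleE c (X : Vt n) i a b : vscale c X i a b = c * X i a b.
Proof. exact: mkME. Qed.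
Lemma vIE i a b : vI n i a b = if a == b then 1 else 0.
Proof. exact: mkME. Qed.

Lemma add3 (F G : forall i : 'I_k, 'I_(n i) -> 'I_(n i) -> R) :
  \S_(i < k) \S_(a < n i) \S_(b < n i) (F i a b + G i a b) =
  \S_(i < k) \S_(a < n i) \S_(b < n i) F i a b + \S_(i < k) \S_(a < n i) \S_(b < n i) G i a b.
Proof. rewrite -sum_add; apply: sum_ext => i; exact: add2. Qed.

Lemma scal3 c (F : forall i : 'I_k, 'I_(n i) -> 'I_(n i) -> R) :
  \S_(i < k) \S_(a < n i) \S_(b < n i) (c * F i a b) =
  c * \S_(i < k) \S_(a < n i) \S_(b < n i) F i a b.
Proof. rewrite -sum_scal; apply: sum_ext => i; exact: scal2. Qed.

Lemma inner_add_r (X Y Z : Vt n) : inner X (vadd Y Z) = inner X Y + inner X Z.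
Proof.
rewrite /inner -add3; apply: sum_ext => i; apply: sum_ext => a; apply: sum_ext => b.
rewrite vaddE; ring.
Qed.

Lemma inner_sub_r (X Y Z : Vt n) : inner X (vsub Y Z) = inner X Y - inner X Z.
Proof.
rewrite /inner.
transitivity (\S_(i < k) \S_(a < n i) \S_(b < n i) (X i a b * Y i a b + -1 * (X i a b * Z i a b))).
  apply: sum_ext => i; apply: sum_ext => a; apply: sum_ext => b; rewrite vsubE; ring.
rewrite add3 scal3; ring.
Qed.

Lemma inner_scale_r c (X Y : Vt n) : inner X (vscale c Y) = c * inner X Y.
Proof.
rewrite /inner -scal3; apply: sum_ext => i; apply: sum_ext => a; apply: sum_ext => b.
rewrite vscaleE; ring.
Qed.

Lemma inner_comm (X Y : Vt n) : inner X Y = inner Y X.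
Proof. apply: sum_ext => i; apply: sum_ext => a; apply: sum_ext => b; ring. Qed.

Lemma inner_ge0 (X : Vt n) : 0 <= inner X X.
Proof. apply: sum_ge0 => i; apply: sum_ge0 => a; apply: sum_ge0 => b; exact: Rle_0_sqr. Qed.

Lemma cs_inner (X Y : Vt n) : inner X Y * inner X Y <= inner Y Y * inner X X.
Proof.
apply: discr2; first exact: inner_ge0.
move=> s.
have : 0 <= \S_(i < k) \S_(a < n i) \S_(b < n i)
   ((X i a b + s * Y i a b) * (X i a b + s * Y i a b)).
  by apply: sum_ge0 => i; apply: sum_ge0 => a; apply: sum_ge0 => b; exact: Rle_0_sqr.
have -> : \S_(i < k) \S_(a < n i) \S_(b < n i)
   ((X i a b + s * Y i a b) * (X i a b + s * Y i a b)) =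
  \S_(i < k) \S_(a < n i) \S_(b < n i)
   ((s * s) * (Y i a b * Y i a b) + ((2 * s) * (X i a b * Y i a b) + X i a b * X i a b)).
  by apply: sum_ext => i; apply: sum_ext => a; apply: sum_ext => b; ring.
rewrite !add3 !scal3 /inner; lra.
Qed.

Lemma abs_cs a b c : 0 <= a -> 0 <= c -> b * b <= a * c -> Rabs b <= sqrt a * sqrt c.
Proof.
move=> Ha Hc H; rewrite -sqrt_mult // -sqrt_Rsqr_abs; apply: sqrt_le_1_alt; exact: H.
Qed.

Lemma inner_lower (X Y : Vt n) : - (vnorm X * vnorm Y) <= inner X Y.
Proof.
have := abs_cs (inner_ge0 X) (inner_ge0 Y) (Rle_trans _ _ _ (cs_inner X Y) (Req_le _ _ (Rmult_comm _ _))).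
rewrite /vnorm; have := Rle_abs (- inner X Y); rewrite Rabs_Ropp; lra.
Qed.

Lemma fejerV (X Y : Vt n) : psd X -> psd Y -> 0 <= inner X Y.
Proof.
move=> [HXs HX] [HYs HY]; apply: sum_ge0 => i.
have h1 : symf (fun a b => X i a b) by move=> a b; exact: HXs.
have h2 : psdf (fun a b => X i a b) by move=> w; exact: (HX i w).
have h3 : psdf (fun a b => Y i a b) by move=> w; exact: (HY i w).
exact: (fejer h1 h2 h3).
Qed.

Lemma psd_add (X Y : Vt n) : psd X -> psd Y -> psd (vadd X Y).
Proof.
move=> [HXs HX] [HYs HY]; split.
  by move=> i a b; rewrite !vaddE HXs HYs.
move=> i v.
have -> : \S_(a < n i) \S_(b < n i) (v a * vadd X Y i a b * v b) =
   \S_(a < n i) \S_(b < n i) (v a * X i a b * v b + v a * Y i a b * v b).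
  by apply: sum_ext => a; apply: sum_ext => b; rewrite vaddE; ring.
rewrite add2; have := HX i v; have := HY i v; lra.
Qed.

Lemma psd_scale c (X : Vt n) : 0 <= c -> psd X -> psd (vscale c X).
Proof.
move=> Hc [HXs HX]; split.
  by move=> i a b; rewrite !vscaleE HXs.
move=> i v.
have -> : \S_(a < n i) \S_(b < n i) (v a * vscale c X i a b * v b) =
   \S_(a < n i) \S_(b < n i) (c * (v a * X i a b * v b)).
  by apply: sum_ext => a; apply: sum_ext => b; rewrite vscaleE; ring.
rewrite scal2; have := HX i v; nra.
Qed.

Lemma qf_triv i (A : 'I_(n i) -> 'I_(n i) -> R) l w : (n i = 0)%N -> l * nsq w <= qf A w.
Proof.
move=> Hn.
have E : forall F : 'I_(n i) -> R, \S_(a < n i) F a = 0.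
  move=> F; apply: sum_zero => a; have := ltn_ord a; rewrite {2}Hn ltn0 //.
rewrite /qf /nsq !E; lra.
Qed.

Lemma sum_triv i (F : 'I_(n i) -> R) : (n i = 0)%N -> \S_(a < n i) F a = 0.
Proof. move=> Hn; apply: sum_zero => a; have := ltn_ord a; rewrite {2}Hn ltn0 //. Qed.

End V.

Section L.
Variables (k : nat) (n : 'I_k -> nat).

Lemma lam_exists (X : Vt n) : symV X -> (exists i, (0 < n i)%N) ->
  exists l, is_eigenvalue X l /\ forall i w, l * nsq w <= qf (X i) w.
Proof.
move=> HX Hpos.
have gen : forall s : seq 'I_k, (exists i, i \in s /\ (0 < n i)%N) ->
    exists l, is_eigenvalue X l /\ forall i, i \in s -> forall w, l * nsq w <= qf (X i) w.
  elim => [|j s IH] [i [Hi Hn]]; first by rewrite in_nil in Hi.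
  have Hsym : forall j, symf (fun a b => X j a b) by move=> j' a b; exact: HX.
  case: (posnP (n j)) => Hj.
    have Hex : exists i, i \in s /\ (0 < n i)%N.
      exists i; split => //; move: Hi; rewrite inE => /orP [/eqP Eij|] //.
      by move: Hn; rewrite Eij Hj.
    have [l [He Hb]] := IH Hex.
    exists l; split => // i'; rewrite inE => /orP [/eqP ->|Hi'] w.
      exact: qf_triv.
    exact: Hb.
  have [lj [vj [Hv [Heq Hbj]]]] := core Hj (Hsym j).
  have Hej : is_eigenvalue X lj by exists j, vj; split.
  case: (classic (exists i, i \in s /\ (0 < n i)%N)) => [Hex|Hno].
    have [l [He Hb]] := IH Hex.
    case: (Rle_lt_dec lj l) => Hl.
      exists lj; split => // i'; rewrite inE => /orP [/eqP ->|Hi'] w.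
        exact: Hbj.
      have := Hb i' Hi' w; have := nsq_ge0 w; nra.
    exists l; split => // i'; rewrite inE => /orP [/eqP ->|Hi'] w.
      apply: Rle_trans (Hbj w); have := nsq_ge0 w; nra.
    exact: Hb.
  exists lj; split => // i'; rewrite inE => /orP [/eqP ->|Hi'] w.
    exact: Hbj.
  apply: qf_triv; case: (posnP (n i')) => // Hp; exfalso; apply: Hno; exists i'; split => //.
have [i Hi] := Hpos.
have [l [He Hb]] := gen (enum 'I_k) (ex_intro _ i (conj (mem_enum _ i) Hi)).
exists l; split => // i' w; apply: Hb; exact: mem_enum.
Qed.

Lemma eig_qf (X : Vt n) i (v : 'I_(n i) -> R) l :
  (forall a, \S_(b < n i) (X i a b * v b) = l * v a) -> qf (X i) v = l * nsq v.
Proof.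
move=> H; rewrite qf_eig /nsq -sum_scal; apply: sum_ext => a; rewrite H; ring.
Qed.

Lemma nsq_pos m (v : 'I_m -> R) a : v a <> 0 -> 0 < nsq v.
Proof.
move=> Ha; have := term_le_nsq v a.
have : 0 < v a * v a by apply: Rsqr_pos_lt.
lra.
Qed.

Lemma lambda_min_eq (X : Vt n) l : is_eigenvalue X l ->
  (forall i w, l * nsq w <= qf (X i) w) -> lambda_min X = l.
Proof.
move=> He Hb.
have Hmin : is_lambda_min X l.
  split => // l' [i [v [[a Ha] Hv]]].
  have := Hb i v; rewrite (eig_qf Hv) => H.
  have Hn := nsq_pos Ha.
  apply: (Rmult_le_reg_r (nsq v)) => //.
have := epsilon_spec (inhabits 0) (is_lambda_min X) (ex_intro _ l Hmin).
rewrite -/(lambda_min X) => [[He' Hb']].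
have := Hb' l He; have := proj2 Hmin _ He'; lra.
Qed.

End L.

Section R1.
Variables (k : nat) (n : 'I_k -> nat) (i : 'I_k) (v : 'I_(n i) -> R).

Definition Wv : forall j : 'I_k, 'I_(n j) -> R :=
  @dfwith _ (fun j => 'I_(n j) -> R) (fun j _ => 0) i v.
Arguments Wv : clear implicits.

Definition X1 : Vt n := fun j => mkM (fun a b => Wv j a * Wv j b).

Lemma r1_inner (Y : Vt n) : inner X1 Y = qf (Y i) v.
Proof.
rewrite /inner (bigD1 i) //= [X in _ + X]big1 => [|j Hj].
  rewrite Rplus_0_r; apply: sum_ext => a; apply: sum_ext => b.
  rewrite mkME /Wv dfwith_in; ring.
apply: sum_zero => a; apply: sum_zero => b.
rewrite mkME /Wv dfwith_out; [ring| by rewrite eq_sym].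
Qed.

Lemma r1_psd : psd X1.
Proof.
split; first by move=> j a b; rewrite !mkME; ring.
move=> j u.
have -> : \S_(a < n j) \S_(b < n j) (u a * X1 j a b * u b) =
   \S_(a < n j) \S_(b < n j) ((u a * Wv j a) * (Wv j b * u b)).
  by apply: sum_ext => a; apply: sum_ext => b; rewrite mkME; ring.
rewrite sum_prod.
have -> : \S_(b < n j) (Wv j b * u b) = \S_(a < n j) (u a * Wv j a).
  by apply: sum_ext => b; ring.
exact: Rle_0_sqr.
Qed.

Lemma r1_norm : inner X1 X1 = nsq v * nsq v.
Proof.
rewrite r1_inner /qf /nsq -sum_prod; apply: sum_ext => a; apply: sum_ext => b.
rewrite mkME /Wv dfwith_in; ring.
Qed.

End R1.

Unset Implicit Arguments.

Theorem lemma3p3 (k : nat) (n : 'I_k -> nat)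
  (K2 : Vt n -> Prop) (Q H : Vt n) (rho : R)
  (* standing setting *)
  (HQ : symV Q) (HH : symV H)
  (HK2 : closed_convex_cone K2)
  (* Condition (I) *)
  (HI_feas : exists X, cap (@psd k n) K2 X /\ inner H X = 1)
  (HI_H : msum (dual (@psd k n)) (dual K2) H)
  (* Condition (II) *)
  (HII : forall Y, dual (cap (@psd k n) K2) Y <-> msum (dual (@psd k n)) (dual K2) Y)
  (* Condition (III) *)
  (Hrho : 0 < rho)
  (HIII : forall X, cap (@psd k n) K2 X -> inner H X = 1 -> inner (vI n) X <= rho)
  (* y with an optimal solution (Y1h, Y2h) of the problem defining g(y) *)
  (y : R) (Y1h Y2h : Vt n)
  (HY1h : dual (@psd k n) Y1h) (HY2h : dual K2 Y2h)
  (Hopt : forall Y1 Y2, dual (@psd k n) Y1 -> dual K2 Y2 ->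
     vnorm (vsub (vsub Q (vscale y H)) (vadd Y1h Y2h))
       <= vnorm (vsub (vsub Q (vscale y H)) (vadd Y1 Y2)))
  (Hg : 0 < vnorm (vsub (vsub Q (vscale y H)) (vadd Y1h Y2h))) :
  let G := fun y' => vsub Q (vscale y' H) in
  let g := vnorm (vsub (G y) (vadd Y1h Y2h)) in
  let t := Rmin 0 (lambda_min (vsub (G y) Y2h)) in
  let dual_feasible := fun y' => msum (dual (@psd k n)) (dual K2) (G y') in
  y - rho * g <= y + rho * t /\
  exists ystar, is_lub dual_feasible ystar /\ y + rho * t <= ystar.
Proof.
move=> G g t df.
case: HY1h => HY1s HY1d; case: HY2h => HY2s HY2d.
case: HK2 => _ [_ [HK2add [HK2scal _]]].
have [X0 [[HX0p HX0k] HX01]] := HI_feas.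
pose M := vsub (G y) Y2h.
have HGs : forall y', symV (G y').
  by move=> y' i a b; rewrite /G !vsubE !vscaleE HQ HH.
have HMs : symV M by move=> i a b; rewrite /M /G !vsubE !vscaleE HQ HH HY2s.
have Hpos : exists i, (0 < n i)%N.
  apply: NNPP => Hno.
  have : inner H X0 = 0.
    apply: sum_zero => i; apply: sum_triv.
    by case: (posnP (n i)) => // Hp; exfalso; apply: Hno; exists i.
  lra.
have [l [Heig Hbnd]] := lam_exists HMs Hpos.
have HL : lambda_min M = l := lambda_min_eq Heig Hbnd.
have Ht : t = Rmin 0 l by rewrite /t -/M HL.
have Hgl : - g <= l.
  case: Heig => i [v [[a Ha] Hev]].
  have Hq := eig_qf Hev.
  have Hn := nsq_pos Ha.
  have E1 : inner (X1 v) M = l * nsq v by rewrite r1_inner.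
  have E2 : inner (X1 v) M = inner (X1 v) Y1h + inner (X1 v) (vsub (G y) (vadd Y1h Y2h)).
    rewrite -inner_add_r; apply: sum_ext => j; apply: sum_ext => a'; apply: sum_ext => b'.
    rewrite /M !vaddE !vsubE vaddE; ring.
  have E3 : 0 <= inner (X1 v) Y1h := HY1d _ (r1_psd v).
  have E4 := inner_lower (X1 v) (vsub (G y) (vadd Y1h Y2h)).
  have E5 : vnorm (X1 v) = nsq v.
    by rewrite /vnorm r1_norm sqrt_square //; exact: nsq_ge0.
  rewrite E5 -/g in E4.
  have : - g * nsq v <= l * nsq v by lra.
  move=> h; apply: (Rmult_le_reg_r (nsq v)) => //.
have Hg0 : 0 <= g by rewrite /g /vnorm; exact: sqrt_pos.
have Ht0 : t <= 0 by rewrite Ht; exact: Rmin_l.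
have Htl : t <= l by rewrite Ht; exact: Rmin_r.
have Htg : - g <= t by rewrite Ht; apply: Rmin_glb; lra.
split; first by nra.
have HHd : dual (cap (@psd k n) K2) H := proj2 (HII H) HI_H.
have Hcap : forall X, cap (@psd k n) K2 X -> inner (vI n) X <= rho * inner X H.
  move=> X [HXp HXk].
  have Hh : 0 <= inner X H := proj2 HHd X (conj HXp HXk).
  case: (Rle_lt_or_eq_dec 0 (inner X H) Hh) => [Hp|H0].
    pose X' := vscale (/ inner X H) X.
    have HiP : 0 <= / inner X H by apply: Rlt_le; apply: Rinv_0_lt_compat.
    have HX' : cap (@psd k n) K2 X' by split; [exact: psd_scale | exact: HK2scal].
    have HhX : inner H X = inner X H := inner_comm H X.
    have := HIII X' HX'.
    rewrite /X' !inner_scale_r HhX Rinv_l; last exact: Rgt_not_eq.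
    move=> /(_ erefl) h.
    have := Rmult_le_compat_l (inner X H) _ _ (Rlt_le _ _ Hp) h.
    have -> : inner X H * (/ inner X H * inner (vI n) X) = inner (vI n) X by field; lra.
    lra.
  rewrite -H0 Rmult_0_r.
  apply: Rnot_lt_le => Hpt.
  pose s := (Rabs (rho - inner (vI n) X0) + 1) / inner (vI n) X.
  have Hs : 0 <= s by rewrite /s; apply: Rlt_le; apply: Rdiv_lt_0_compat => //; have := Rabs_pos (rho - inner (vI n) X0); lra.
  pose Xs := vadd X0 (vscale s X).
  have HXs : cap (@psd k n) K2 Xs.
    split; [apply: psd_add => //; exact: psd_scale | apply: HK2add => //; exact: HK2scal].
  have := HIII Xs HXs.
  rewrite /Xs inner_add_r inner_scale_r inner_add_r inner_scale_r (inner_comm H X) -H0 HX01.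
  rewrite Rmult_0_r Rplus_0_r => /(_ erefl).
  have -> : s * inner (vI n) X = Rabs (rho - inner (vI n) X0) + 1 by rewrite /s; field; lra.
  have := Rle_abs (rho - inner (vI n) X0); lra.
pose y' := y + rho * t.
have Hpsd : psd (vsub M (vscale t (vI n))).
  split.
    by move=> i a b; rewrite [LHS]vsubE [RHS]vsubE !vscaleE !vIE (HMs i a b) eq_sym.
  move=> i w.
  have := Hbnd i w.
  have -> : \S_(a < n i) \S_(b < n i) (w a * vsub M (vscale t (vI n)) i a b * w b) =
     qf (M i) w - t * nsq w.
    rewrite /qf /nsq -sum_scal -sum_sub; apply: sum_ext => a.
    transitivity (\S_(b < n i) (w a * M i a b * w b - (t * w a) * (w b * (if b == a then 1 else 0)))).
      apply: sum_ext => b; rewrite vsubE vscaleE vIE (eq_sym a b); ring.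
    rewrite sum_sub sum_scal sum_delta'; ring.
  have := nsq_ge0 w; nra.
have Hy' : df y'.
  apply: (proj1 (HII (G y'))); split; first exact: HGs.
  move=> X HX.
  have HXc := HX; case: HX => HXp HXk.
  have F1 := fejerV HXp Hpsd.
  rewrite inner_sub_r inner_scale_r /M inner_sub_r in F1.
  have F2 := HY2d X HXk.
  have F3 := Hcap X HXc.
  rewrite inner_comm in F3.
  rewrite /G inner_sub_r inner_scale_r in F1 *.
  rewrite /y'.
  have F4 : t * (rho * inner X H) <= t * inner X (vI n).
    exact: Rmult_le_compat_neg_l.
  rewrite inner_sub_r inner_scale_r; nra.
have Hub : forall y'', df y'' -> y'' <= inner X0 Q.
  move=> y'' Hd.
  have := proj2 (proj2 (HII (G y'')) Hd) X0 (conj HX0p HX0k).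
  rewrite /G inner_sub_r inner_scale_r (inner_comm X0 H) HX01; lra.
have [ys Hys] := completeness df (ex_intro _ (inner X0 Q) Hub) (ex_intro _ y' Hy').
exists ys; split => //.
exact: (proj1 Hys y' Hy').
Qed.
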